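(* Let $p\in\mathbb{N}_0$, let $n\ge p+1$ be an integer, let $\eta>0$ and write $x=\cosh\eta$. Then \[ \sum_{k=-p}^{p}\frac{(-1)^{k+1}e^{k\eta}R_p^k(x)}{n-k}=(-1)^{p+1}p!\,(n-p-1)!\,e^{n\eta}\sinh^p\eta\,P_p^{-n}(\coth\eta). \]
   Context: For $z>1$ and integers $p\ge0$, $n\ge1$, $P_p^{-n}(z)=\frac{1}{n!}\left(\frac{z-1}{z+1}\right)^{n/2}{}_2F_1\!\left(-p,p+1;1+n;\frac{1-z}{2}\right)$ (associated Legendre function of the first kind). The logarithmic polynomials $R_p^k(x)$, $p\in\mathbb{N}_0$, $k\in\mathbb{Z}$, are defined by $R_0^0(x)=1$, $R_0^k(x)=0$ for $k\ne0$, and $R_p^k(x)=\tfrac12 R_{p-1}^{k-1}(x)+xR_{p-1}^k(x)+\tfrac12 R_{p-1}^{k+1}(x)$ for $p\ge1$. *)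

(* Defs.v *)
From Stdlib Require Import Reals ZArith.
From Coquelicot Require Import Coquelicot.
Open Scope R_scope.

Fixpoint poch (a : R) (j : nat) : R :=
  match j with
  | O => 1
  | S i => poch a i * (a + INR i)
  end.

Definition hyp2F1 (a b c w : R) : R :=
  Series (fun j => poch a j * poch b j / (poch c j * INR (fact j)) * w ^ j).

Definition legP_neg (p n : nat) (z : R) : R :=
  / INR (fact n) * Rpower ((z - 1) / (z + 1)) (INR n / 2)
  * hyp2F1 (- INR p) (INR p + 1) (1 + INR n) ((1 - z) / 2).

Fixpoint logR (p : nat) (x : R) (k : Z) : R :=
  match p with
  | O => if Z.eqb k 0 then 1 else 0
  | S q => / 2 * logR q x (k - 1) + x * logR q x k + / 2 * logR q x (k + 1)
  end.

(* Main.v *)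
Require Import Defs.
From Stdlib Require Import Reals ZArith Lia Lra.
From Coquelicot Require Import Coquelicot.
Open Scope R_scope.

Lemma logR_out p x k : (Z.abs k > Z.of_nat p)%Z -> logR p x k = 0.
Proof.
  revert k; induction p as [|p IH]; intros k Hk; simpl.
  - destruct (Z.eqb_spec k 0); [lia| reflexivity].
  - rewrite !IH; try lia. ring.
Qed.

Definition zs (f : Z -> R) (a : Z) (N : nat) :=
  sum_f_R0 (fun j => f (a + Z.of_nat j)%Z) N.

Lemma zs_ext f g a N : (forall k, (a <= k <= a + Z.of_nat N)%Z -> f k = g k) ->
  zs f a N = zs g a N.
Proof. intros H; unfold zs; apply sum_eq; intros i Hi; apply H; lia. Qed.

Lemma zs_head f a N : zs f a (S N) = f a + zs f (a+1)%Z N.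
Proof.
  unfold zs; induction N as [|N IH].
  - simpl. replace (a + 0)%Z with a by lia. replace (a+1)%Z with (a + 1 + 0)%Z at 1 by lia. reflexivity.
  - change (sum_f_R0 (fun j => f (a + Z.of_nat j)%Z) (S (S N)))
      with (sum_f_R0 (fun j => f (a + Z.of_nat j)%Z) (S N) + f (a + Z.of_nat (S (S N)))%Z).
    rewrite IH. simpl sum_f_R0 at 2.
    rewrite Rplus_assoc; do 3 f_equal; lia.
Qed.

Lemma zs_tail f a N : zs f a (S N) = zs f a N + f (a + Z.of_nat (S N))%Z.
Proof. reflexivity. Qed.

Lemma zs_shift g d a N : zs (fun k => g (k + d)%Z) a N = zs g (a + d)%Z N.
Proof. unfold zs; apply sum_eq; intros i _; f_equal; lia. Qed.

Lemma zs_plus f g a N : zs (fun k => f k + g k) a N = zs f a N + zs g a N.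
Proof. unfold zs; apply plus_sum. Qed.

Lemma zs_scal c f a N : zs (fun k => c * f k) a N = c * zs f a N.
Proof. unfold zs. rewrite scal_sum. apply sum_eq; intros; ring. Qed.

Lemma GF p x t : t <> 0 ->
  zs (fun k => logR p x k * powerRZ t k) (- Z.of_nat p) (2 * p)
  = (/2 * t + x + /2 * /t) ^ p.
Proof.
  intro Ht. induction p as [|p IH].
  - unfold zs; simpl. ring.
  - set (g := fun k => logR p x k * powerRZ t k).
    assert (Hg : forall k, (Z.abs k > Z.of_nat p)%Z -> g k = 0).
    { intros k Hk; unfold g; rewrite logR_out; [ring|lia]. }
    transitivity (zs (fun k => /2 * t * g (k + -1)%Z + (x * g k + /2 * /t * g (k + 1)%Z))
                   (- Z.of_nat (S p)) (2 * S p)).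
    { apply zs_ext; intros k _. unfold g; simpl logR.
      replace (k - 1)%Z with (k + -1)%Z by lia.
      assert (E1 : powerRZ t (k + -1) = / t * powerRZ t k).
      { rewrite powerRZ_add by auto. simpl. field. auto. }
      assert (E2 : powerRZ t (k + 1) = t * powerRZ t k).
      { rewrite powerRZ_add by auto. simpl. ring. }
      rewrite E1, E2. field. auto. }
    rewrite !zs_plus, !zs_scal, !zs_shift.
    replace (2 * S p)%nat with (S (S (2 * p))) by lia.
    rewrite (zs_head g (- Z.of_nat (S p) + -1)), zs_head.
    rewrite (zs_head g (- Z.of_nat (S p))), zs_tail.
    rewrite (zs_tail g (- Z.of_nat (S p) + 1)), zs_tail.
    rewrite !Hg by lia.
    replace (- Z.of_nat (S p) + -1 + 1 + 1)%Z with (- Z.of_nat p)%Z by lia.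
    replace (- Z.of_nat (S p) + 1)%Z with (- Z.of_nat p)%Z by lia.
    unfold g; rewrite IH. rewrite <- tech_pow_Rmult. field. auto.
Qed.

Lemma I_mono m : is_RInt (fun s => s ^ m) 0 1 (/ INR (S m)).
Proof.
  assert (H := is_RInt_derive (fun s => s ^ (S m) / INR (S m)) (fun s => s ^ m) 0 1).
  replace (/ INR (S m)) with (minus (1 ^ (S m) / INR (S m)) (0 ^ (S m) / INR (S m))).
  - apply H.
    + intros x _. auto_derive; auto. change (match m with 0%nat => 1 | S _ => INR m + 1 end) with (INR (S m)). field. 
      apply not_0_INR; lia.
    + intros x _. apply continuity_pt_filterlim. apply derivable_continuous_pt.
      apply derivable_pt_pow.
  - unfold minus, plus, opp; simpl. rewrite pow1. change (match m with 0%nat => 1 | S _ => INR m + 1 end) with (INR (S m)). field. apply not_0_INR; lia.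
Qed.

Lemma I_sum (F : nat -> R -> R) (I : nat -> R) a b N :
  (forall j, (j <= N)%nat -> is_RInt (F j) a b (I j)) ->
  is_RInt (fun s => sum_f_R0 (fun j => F j s) N) a b (sum_f_R0 I N).
Proof.
  induction N as [|N IH]; intros H; simpl.
  - apply H; lia.
  - apply (is_RInt_plus (fun s => sum_f_R0 (fun j => F j s) N) (F (S N))).
    + apply IH; intros; apply H; lia.
    + apply H; lia.
Qed.

Lemma I_scal (f : R -> R) a b c l : is_RInt f a b l ->
  is_RInt (fun s => c * f s) a b (c * l).
Proof. intro H. apply (is_RInt_scal f a b c l H). Qed.

Lemma INR_fact_pos k : 0 < INR (fact k).
Proof. apply lt_0_INR, lt_O_fact. Qed.

Lemma Beta a b : is_RInt (fun s => s ^ a * (1 - s) ^ b) 0 1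
  (INR (fact a) * INR (fact b) / INR (fact (a + b + 1))).
Proof.
  revert a; induction b as [|b IH]; intros a.
  - replace (INR (fact a) * INR (fact 0) / INR (fact (a + 0 + 1))) with (/ INR (S a)).
    + eapply is_RInt_ext; [| apply I_mono]. intros x _; simpl; ring.
    + replace (a + 0 + 1)%nat with (S a) by lia. rewrite fact_simpl, mult_INR. simpl (fact 0).
      pose proof (INR_fact_pos a). change (INR 1) with 1. field. split; [lra|]. apply not_0_INR; lia.
  - assert (E : INR (fact a) * INR (fact (S b)) / INR (fact (a + S b + 1)) =
       INR (fact a) * INR (fact b) / INR (fact (a + b + 1)) -
       INR (fact (S a)) * INR (fact b) / INR (fact (S a + b + 1))).
    { replace (S a + b + 1)%nat with (S (a + b + 1)) by lia.
      replace (a + S b + 1)%nat with (S (a + b + 1)) by lia.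
      rewrite !(fact_simpl (a + b + 1)), (fact_simpl a), (fact_simpl b), !mult_INR, !S_INR, !plus_INR.
      pose proof (INR_fact_pos a). pose proof (INR_fact_pos b).
      pose proof (INR_fact_pos (a+b+1)). pose proof (pos_INR a). pose proof (pos_INR b).
      change (INR 1) with 1. field. lra. }
    rewrite E.
    eapply is_RInt_ext; [| exact (is_RInt_minus _ _ _ _ _ _ (IH a) (IH (S a)))].
    intros x _; unfold minus, plus, opp; simpl. ring.
Qed.

Lemma PW p n u s : (p + 1 <= n)%nat -> 0 < u -> 0 < s ->
  zs (fun k => logR p ((u + / u) / 2) k * powerRZ (- u) k
                * s ^ Z.to_nat (Z.of_nat n - 1 - k)) (- Z.of_nat p) (2 * p)
  = s ^ (n - 1 - p) * ((1 - s) * (s - u * u) / (2 * u)) ^ p.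
Proof.
  intros Hn Hu Hs.
  assert (Hs0 : s <> 0) by lra. assert (Hu0 : u <> 0) by lra.
  transitivity (zs (fun k => s ^ (n - 1) * (logR p ((u + / u) / 2) k * powerRZ (- u / s) k))
                 (- Z.of_nat p) (2 * p)).
  { apply zs_ext; intros k Hk.
    unfold Rdiv. rewrite powerRZ_mult, powerRZ_inv'.
    rewrite !pow_powerRZ. rewrite Z2Nat.id by lia.
    replace (Z.of_nat (n - 1)) with ((Z.of_nat n - 1 - k) + k)%Z by lia.
    rewrite powerRZ_add by auto.
    assert (powerRZ s k <> 0) by (apply powerRZ_NOR; auto).
    field. auto. }
  rewrite zs_scal, GF.
  2: { unfold Rdiv; apply Rmult_integral_contrapositive; split; [lra| apply Rinv_neq_0_compat; auto]. }
  replace (/ 2 * (- u / s) + (u + / u) / 2 + / 2 * / (- u / s))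
    with (/ s * ((1 - s) * (s - u * u) / (2 * u))) by (field; auto).
  rewrite Rpow_mult_distr, pow_inv.
  replace (n - 1)%nat with ((n - 1 - p) + p)%nat at 1 by lia.
  rewrite pow_add. field. apply pow_nonzero; auto.
Qed.

Lemma dummy_ : True. Proof. exact I. Qed.

Lemma RHSexp p a u s : u <> 0 ->
  s ^ a * ((1 - s) * (s - u * u) / (2 * u)) ^ p =
  (/ (2 * u)) ^ p * sum_f_R0 (fun i => Binomial.C p i * (-1) ^ i * (1 - u * u) ^ (p - i)
                                   * (s ^ a * (1 - s) ^ (p + i))) p.
Proof.
  intro Hu.
  replace ((1 - s) * (s - u * u) / (2 * u)) with ((1 - s) * (-(1 - s) + (1 - u * u)) * / (2 * u))
    by (field; auto).
  rewrite !Rpow_mult_distr, binomial.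
  match goal with |- _ = _ * sum_f_R0 ?g _ => set (G := g) end.
  match goal with |- _ * (_ * sum_f_R0 ?g _ * _) = _ => set (G0 := g) end.
  transitivity ((/ (2 * u)) ^ p * ((s ^ a * (1 - s) ^ p) * sum_f_R0 G0 p)); [ring|].
  f_equal. rewrite scal_sum. apply sum_eq; intros i Hi. unfold G, G0.
  rewrite pow_add. replace (-(1 - s)) with ((-1) * (1 - s)) by ring.
  rewrite Rpow_mult_distr. ring.
Qed.

Lemma MI p n u : (p + 1 <= n)%nat -> 0 < u ->
  zs (fun k => logR p ((u + / u) / 2) k * powerRZ (- u) k / IZR (Z.of_nat n - k))
     (- Z.of_nat p) (2 * p)
  = (/ (2 * u)) ^ p * sum_f_R0 (fun i => Binomial.C p i * (-1) ^ i * (1 - u * u) ^ (p - i)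
        * (INR (fact (n - 1 - p)) * INR (fact (p + i)) / INR (fact (n + i)))) p.
Proof.
  intros Hn Hu.
  set (F := fun s => zs (fun k => logR p ((u + / u) / 2) k * powerRZ (- u) k
                * s ^ Z.to_nat (Z.of_nat n - 1 - k)) (- Z.of_nat p) (2 * p)).
  assert (H1 : is_RInt F 0 1 (zs (fun k => logR p ((u + / u) / 2) k * powerRZ (- u) k
                 / IZR (Z.of_nat n - k)) (- Z.of_nat p) (2 * p))).
  { unfold F, zs. apply I_sum. intros j Hj.
    set (k := (- Z.of_nat p + Z.of_nat j)%Z).
    replace (logR p ((u + / u) / 2) k * powerRZ (- u) k / IZR (Z.of_nat n - k))
      with (logR p ((u + / u) / 2) k * powerRZ (- u) k * / INR (S (Z.to_nat (Z.of_nat n - 1 - k)))).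
    - apply I_scal, I_mono.
    - rewrite INR_IZR_INZ. unfold Rdiv. do 2 f_equal.
      rewrite Nat2Z.inj_succ, Z2Nat.id. f_equal. all: unfold k; lia. }
  assert (H2 : is_RInt F 0 1 ((/ (2 * u)) ^ p * sum_f_R0 (fun i => Binomial.C p i * (-1) ^ i
        * (1 - u * u) ^ (p - i)
        * (INR (fact (n - 1 - p)) * INR (fact (p + i)) / INR (fact (n + i)))) p)).
  { apply (is_RInt_ext (fun s => (/ (2 * u)) ^ p * sum_f_R0 (fun i => Binomial.C p i * (-1) ^ i
              * (1 - u * u) ^ (p - i) * (s ^ (n - 1 - p) * (1 - s) ^ (p + i))) p)).
    - intros s Hs. rewrite Rmin_left, Rmax_right in Hs by lra.
      unfold F. rewrite PW; [ | lia | lra | lra]. rewrite RHSexp; [reflexivity | lra].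
    - apply I_scal. apply (I_sum (fun i s => Binomial.C p i * (-1) ^ i * (1 - u * u) ^ (p - i)
              * (s ^ (n - 1 - p) * (1 - s) ^ (p + i)))).
      intros i Hi. apply I_scal.
      replace (n + i)%nat with (n - 1 - p + (p + i) + 1)%nat by lia.
      apply Beta. }
  assert (E1 := is_RInt_unique (V := R_CompleteNormedModule) F 0 1 _ H1). assert (E2 := is_RInt_unique (V := R_CompleteNormedModule) F 0 1 _ H2). rewrite <- E1, <- E2. reflexivity.
Qed.

Lemma exp_nat m e : exp (INR m * e) = exp e ^ m.
Proof.
  induction m as [|m IH].
  - simpl. rewrite Rmult_0_l, exp_0; reflexivity.
  - rewrite S_INR, Rmult_plus_distr_r, Rmult_1_l, exp_plus, IH. simpl. ring.
Qed.

Lemma exp_Z k e : exp (IZR k * e) = powerRZ (exp e) k.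
Proof.
  destruct k as [|q|q]; simpl.
  - rewrite Rmult_0_l, exp_0; reflexivity.
  - rewrite <- exp_nat. f_equal. rewrite INR_IZR_INZ, positive_nat_Z. reflexivity.
  - rewrite <- exp_nat, <- exp_Ropp. f_equal. rewrite INR_IZR_INZ, positive_nat_Z.
    rewrite <- Pos2Z.opp_pos, opp_IZR. ring.
Qed.

Lemma poch_zero p j : (p < j)%nat -> poch (- INR p) j = 0.
Proof.
  induction j as [|j IH]; intros H; [lia|]. simpl.
  destruct (Nat.eq_dec j p) as [->|Hne].
  - ring.
  - rewrite IH by lia. ring.
Qed.

Lemma poch1 p j : (j <= p)%nat -> poch (- INR p) j * INR (fact (p - j)) = (-1) ^ j * INR (fact p).
Proof.
  induction j as [|j IH]; intros H.
  - simpl. rewrite Nat.sub_0_r. ring.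
  - simpl poch. replace (p - j)%nat with (S (p - S j)) in IH by lia.
    rewrite fact_simpl, mult_INR in IH.
    replace (INR (S (p - S j))) with (INR p - INR j) in IH
      by (rewrite <- minus_INR by lia; f_equal; lia).
    simpl pow. assert (IH2 := IH ltac:(lia)). replace (-1 * (-1)^j * INR (fact p)) with (-1 * ((-1)^j * INR (fact p))) by ring. rewrite <- IH2. ring.
Qed.

Lemma poch2 a j : poch (INR a + 1) j * INR (fact a) = INR (fact (a + j)).
Proof.
  induction j as [|j IH].
  - simpl. rewrite Nat.add_0_r. ring.
  - simpl poch. replace (a + S j)%nat with (S (a + j)) by lia.
    rewrite fact_simpl, mult_INR, <- IH, S_INR, plus_INR. ring.
Qed.

Lemma series_fin (a : nat -> R) p : (forall j, (p < j)%nat -> a j = 0) ->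
  Series a = sum_f_R0 a p.
Proof.
  intros H. apply is_series_unique. unfold is_series.
  apply (filterlim_ext_loc (fun _ => sum_f_R0 a p)).
  - exists p. intros N HN. rewrite sum_n_Reals.
    induction N as [|N IH].
    + replace p with 0%nat by lia. reflexivity.
    + destruct (Nat.eq_dec (S N) p) as [<-|Hne]; [reflexivity|].
      simpl. rewrite H by lia. rewrite IH by lia. ring.
  - apply filterlim_const.
Qed.

Lemma sum_scal_l c f N : c * sum_f_R0 f N = sum_f_R0 (fun i => c * f i) N.
Proof. rewrite scal_sum. apply sum_eq; intros; ring. Qed.

Lemma sum_opp f N : sum_f_R0 (fun i => - f i) N = - sum_f_R0 f N.
Proof. induction N; simpl; [ring| rewrite IHN; ring]. Qed.

Theorem mainTheorem5 (p n : nat) (eta : R) :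
  (p + 1 <= n)%nat -> 0 < eta ->
  let x := cosh eta in
  sum_f_R0 (fun j =>
      let k := (Z.of_nat j - Z.of_nat p)%Z in
      powerRZ (-1) (k + 1) * exp (IZR k * eta) * logR p x k / (INR n - IZR k))
    (2 * p)
  = (-1) ^ (p + 1) * INR (fact p) * INR (fact (n - p - 1)) * exp (INR n * eta)
    * sinh eta ^ p * legP_neg p n (cosh eta / sinh eta).
Proof.
  intros Hn Heta x.
  set (u := exp eta).
  assert (Hu1 : 1 < u) by (unfold u; rewrite <- exp_0; apply exp_increasing; lra).
  assert (Hx : x = (u + / u) / 2) by (unfold x, cosh, u; rewrite exp_Ropp; reflexivity).
  assert (Hs : sinh eta = (u - / u) / 2) by (unfold sinh, u; rewrite exp_Ropp; reflexivity).
  assert (Hu0 : u <> 0) by lra.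
  assert (Hw : 1 - u * u <> 0) by nra.
  assert (Huu : u - / u <> 0).
  { intro H. apply Hw. field_simplify in H; [|auto]. 
    assert (u * u - 1 = 0) by (apply (Rmult_eq_reg_r (/ u)); [ | apply Rinv_neq_0_compat; auto];
       rewrite Rmult_0_l; rewrite <- H; field; auto). lra. }
  transitivity (- zs (fun k => logR p ((u + / u) / 2) k * powerRZ (- u) k / IZR (Z.of_nat n - k))
     (- Z.of_nat p) (2 * p)).
  { unfold zs. rewrite <- sum_opp. apply sum_eq; intros j Hj.
    replace (Z.of_nat j - Z.of_nat p)%Z with (- Z.of_nat p + Z.of_nat j)%Z by lia.
    set (k := (- Z.of_nat p + Z.of_nat j)%Z).
    rewrite exp_Z. fold u. rewrite <- Hx.
    rewrite powerRZ_add by lra. replace (- u) with (-1 * u) by ring.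
    rewrite powerRZ_mult. rewrite minus_IZR, <- INR_IZR_INZ. simpl powerRZ. set (d := INR n - IZR k). set (P1 := powerRZ (-1) k). set (P2 := powerRZ u k). set (L := logR p x k). unfold Rdiv. ring. }
  rewrite MI; [|lia|lra].
  assert (Hc : cosh eta = (u + / u) / 2) by (unfold cosh, u; rewrite exp_Ropp; reflexivity).
  set (w := 1 - u * u).
  assert (Hz : (cosh eta / sinh eta - 1) / (cosh eta / sinh eta + 1) = exp (- (2 * eta))).
  { rewrite Hc, Hs, exp_Ropp. replace (2 * eta) with (eta + eta) by ring.
    rewrite exp_plus. fold u. field. repeat split; auto.
    all: nra. }
  assert (Hy : (1 - cosh eta / sinh eta) / 2 = / w).
  { rewrite Hc, Hs. unfold w. field. repeat split; nra. }
  assert (HR : Rpower (exp (- (2 * eta))) (INR n / 2) = / exp (INR n * eta)).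
  { unfold Rpower. rewrite ln_exp, <- exp_Ropp. f_equal. field. }
  assert (Hps : (-1) ^ (p + 1) * sinh eta ^ p = - ((w * / (2 * u)) ^ p)).
  { rewrite Hs. replace ((u - / u) / 2) with ((-1) * (w * / (2 * u))) by (unfold w; field; auto).
    rewrite Rpow_mult_distr, pow_add.
    replace ((-1) ^ p * (-1) ^ 1 * ((-1) ^ p * (w * / (2 * u)) ^ p))
      with (((-1) * (-1)) ^ p * (-1) * (w * / (2 * u)) ^ p) by (rewrite Rpow_mult_distr; ring).
    replace ((-1) * (-1)) with 1 by ring. rewrite pow1. ring. }
  unfold legP_neg, hyp2F1. rewrite Hz, HR, Hy.
  rewrite (series_fin _ p).
  2: { intros j Hj. rewrite poch_zero by lia. unfold Rdiv. ring. }
  set (SS := sum_f_R0 _ p) at 2.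
  transitivity (- ((w * / (2 * u)) ^ p) * (INR (fact p) * INR (fact (n - p - 1)) * / INR (fact n)) * SS).
  2: { rewrite <- Hps. pose proof (exp_pos (INR n * eta)).
       pose proof (INR_fact_pos n). field. split; lra. }
  unfold SS. rewrite !sum_scal_l, <- sum_opp. apply sum_eq. intros j Hj.
  assert (E1 : poch (- INR p) j = (-1) ^ j * INR (fact p) / INR (fact (p - j))).
  { rewrite <- poch1 by lia. pose proof (INR_fact_pos (p - j)). field. lra. }
  assert (E2 : poch (INR p + 1) j = INR (fact (p + j)) / INR (fact p)).
  { rewrite <- poch2. pose proof (INR_fact_pos p). field. lra. }
  assert (E3 : poch (1 + INR n) j = INR (fact (n + j)) / INR (fact n)).
  { rewrite Rplus_comm, <- poch2. pose proof (INR_fact_pos n). field. lra. }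
  rewrite E1, E2, E3. unfold Binomial.C.
  rewrite Rpow_mult_distr, !pow_inv.
  rewrite (pow_RN_plus w (p - j) j) by auto.
  replace (p - j + j)%nat with p by lia.
  replace (n - p - 1)%nat with (n - 1 - p)%nat by lia.
  pose proof (INR_fact_pos p). pose proof (INR_fact_pos n). pose proof (INR_fact_pos j).
  pose proof (INR_fact_pos (p - j)). pose proof (INR_fact_pos (p + j)).
  pose proof (INR_fact_pos (n + j)). pose proof (INR_fact_pos (n - 1 - p)).
  assert (w ^ j <> 0) by (apply pow_nonzero; auto).
  assert ((2 * u) ^ p <> 0) by (apply pow_nonzero; lra).
  field. repeat split; try lra; auto.
Qed.
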